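(* Let $\mathbf{I}$ be a $d$-system of ideals in a ring $R$, $A:=\mathscr{A}(R,\mathbf{I})$, and $T_j:=\bigoplus_{i=1}^d\mathbb{T}_{ij}$ for $1\le j\le d$. Then, as left $A$-modules, $T_j\cong Ae_1/(Af_{d+1-j}Ae_1)=(A/J_{d+1-j})e_1$ for all $1\le j\le d$.
   Context: A $d$-system of ideals in $R$ is a collection $\{I_{ij}\mid1\le i,j\le d+1\}$ of two-sided ideals with $I_{ij}I_{jk}\subset I_{ik}$ and $I_{ij}=R$ for $i\ge j$. $\mathscr{A}(R,\mathbf{I}):=\bigoplus_{1\le i,j\le d}X_{ij}$, $X_{ij}:=I_{ij}/I_{i,d+1}$, with multiplication $(x+I_{i,d+1})(y+I_{k,d+1})=\delta_{jk}(xy+I_{i,d+1})\in X_{il}$ for $x\in I_{ij},y\in I_{kl}$. Put $e_k:=1+I_{k,d+1}\in X_{kk}$, $f_j:=\sum_{k>j}e_k$ for $0\le j\le d$ ($f_d=0$), $J_j:=Af_jA$. Define $\mathbb{T}_{kl}:=R/I_{k,d+2-l}$ for $1\le k,l\le d$, with $A$ acting on $\bigoplus_{k}\mathbb{T}_{kl}$ by $(x+I_{i,d+1})\cdot(r+I_{k,d+2-l})=\delta_{jk}(xr+I_{i,d+2-l})\in\mathbb{T}_{il}$ for $x\in I_{ij}$, $r\in R$. *)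

(* Defs.v *)
From HB Require Import structures.
From mathcomp Require Import all_boot all_order all_algebra.
Set Implicit Arguments. Unset Strict Implicit. Unset Printing Implicit Defensive.
Import GRing.Theory.
Local Open Scope ring_scope.

(* The ideals I_{ij} are
   indexed by natural numbers 1 <= i,j <= d+1 exactly as in the paper; the
   values of I outside this range are irrelevant.  Matrix indices
   i : 'I_d correspond to the paper's index i+1. *)

Definition two_sided_ideal (R : pzRingType) (S : R -> Prop) : Prop :=
  [/\ S 0,
      (forall x y, S x -> S y -> S (x - y)),
      (forall r x, S x -> S (r * x)) &
      (forall r x, S x -> S (x * r))].

Definition dsystem (R : pzRingType) (d : nat) (I : nat -> nat -> R -> Prop) : Prop :=
  [/\ (forall i j, (1 <= i <= d.+1)%N -> (1 <= j <= d.+1)%N ->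
         two_sided_ideal (I i j)),
      (forall i j k x y, (1 <= i <= d.+1)%N -> (1 <= j <= d.+1)%N ->
         (1 <= k <= d.+1)%N -> I i j x -> I j k y -> I i k (x * y)) &
      (forall i j r, (1 <= j <= i)%N -> (i <= d.+1)%N -> I i j r)].

(* Elements of A = (+)_{i,j} X_{ij}, X_{ij} = I_{ij}/I_{i,d+1}, are
   represented by d x d matrices x with x_{ij} in I_{ij}; the product
   (x+I)(y+I) = delta_{jk}(xy + I) extended bilinearly is matrix product. *)
Definition inA (R : pzRingType) (d : nat) (I : nat -> nat -> R -> Prop)
  (x : 'M[R]_d) : Prop :=
  forall i j : 'I_d, I i.+1 j.+1 (x i j).

Definition nullA (R : pzRingType) (d : nat) (I : nat -> nat -> R -> Prop)
  (x : 'M[R]_d) : Prop :=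
  forall i j : 'I_d, I i.+1 d.+1 (x i j).

Definition e1 (R : pzRingType) (d : nat) : 'M[R]_d :=
  \matrix_(i, j) ((nat_of_ord i == 0%N) && (nat_of_ord j == 0%N))%:R.

(* f_m = sum_{k > m} e_k   (paper indices k = 1..d) *)
Definition fsum (R : pzRingType) (d m : nat) : 'M[R]_d :=
  \sum_(k < d | (m < k.+1)%N) delta_mx k k.

(* z (an element of A) lies in A f_m A e_1 = { sum_n a_n f_m b_n e_1 }
   modulo the zero of A. *)
Definition in_AfAe1 (R : pzRingType) (d : nat) (I : nat -> nat -> R -> Prop)
  (m : nat) (z : 'M[R]_d) : Prop :=
  exists (n : nat) (a b : 'I_n -> 'M[R]_d),
    (forall k, inA I (a k)) /\ (forall k, inA I (b k)) /\
    nullA I (z - \sum_(k < n) (a k *m fsum R d m *m b k *m e1 R d)).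

(* T_l = (+)_k TT_{kl}, TT_{kl} = R/I_{k,d+2-l}: represented by column
   vectors v in R^d; v represents 0 iff v_k in I_{k,d+2-l} for all k.
   The A-action (x + I)(r + I) = delta_{jk}(xr + I) is x *m v. *)
Definition nullT (R : pzRingType) (d : nat) (I : nat -> nat -> R -> Prop)
  (l : nat) (v : 'cV[R]_d) : Prop :=
  forall k : 'I_d, I k.+1 (d.+2 - l)%N (v k 0).

(* An isomorphism of left A-modules T_l ~= A e_1 / (A f_m A e_1), given on
   representatives: phi v (in A) represents the class of (phi v) e_1. *)
Definition Amod_iso (R : pzRingType) (d : nat) (I : nat -> nat -> R -> Prop)
  (l m : nat) (phi : 'cV[R]_d -> 'M[R]_d) : Prop :=
  (forall v, inA I (phi v)) /\
  [/\
      (forall v w, nullT I l (v - w) ->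
         in_AfAe1 I m (phi v *m e1 R d - phi w *m e1 R d)),
      (forall v w, in_AfAe1 I m
         (phi (v + w) *m e1 R d - (phi v *m e1 R d + phi w *m e1 R d))),
      (forall x v, inA I x ->
         in_AfAe1 I m (phi (x *m v) *m e1 R d - x *m (phi v *m e1 R d))),
      (forall v w, in_AfAe1 I m (phi v *m e1 R d - phi w *m e1 R d) ->
         nullT I l (v - w)) &
      (forall a, inA I a -> exists v,
         in_AfAe1 I m (phi v *m e1 R d - a *m e1 R d))].

(* Main.v *)
Require Import Defs.
From HB Require Import structures.
From mathcomp Require Import all_boot all_order all_algebra.
Local Open Scope ring_scope.
Set Implicit Arguments. Unset Strict Implicit.
Import GRing.Theory.

Section Aux.
Variable R : pzRingType.

Lemma idealD (J : R -> Prop) x y : two_sided_ideal J -> J x -> J y -> J (x + y).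
Proof.
case=> J0 JB _ _ Jx Jy.
have := JB x (0 - y) Jx (JB 0 y J0 Jy).
by rewrite sub0r opprK.
Qed.

Lemma ideal_sum (J : R -> Prop) n (F : 'I_n -> R) (P : pred 'I_n) :
  two_sided_ideal J -> (forall k, P k -> J (F k)) -> J (\sum_(k < n | P k) F k).
Proof.
move=> hJ hF; apply: (big_ind J) => //; first by case: hJ.
by move=> x y; apply: idealD.
Qed.

Lemma mxdelta n p r (z : 'M[R]_(n, p)) (a : 'I_p) (b : 'I_r) i k :
  (z *m delta_mx a b) i k = z i a * (k == b)%:R.
Proof.
rewrite mxE (bigD1 a) //= big1 ?addr0; first by rewrite mxE eqxx.
by move=> l hl; rewrite mxE (negbTE hl) mulr0.
Qed.

Lemma rowideal (J : R -> Prop) n p q (Y : 'M[R]_(n, p)) (M : 'M[R]_(p, q)) i k :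
  two_sided_ideal J -> (forall l, J (Y i l)) -> J ((Y *m M) i k).
Proof.
move=> hJ hY; rewrite mxE; apply: ideal_sum => // l _.
by case: hJ => _ _ _ H; apply: H.
Qed.

End Aux.

Theorem lemma4p3 (R : pzRingType) (d : nat) (I : nat -> nat -> R -> Prop)
  (hI : dsystem d I) (j : nat) (hj : (1 <= j <= d)%N) :
  exists phi : 'cV[R]_d -> 'M[R]_d, Amod_iso I j (d.+1 - j) phi.
Proof.
case: d I hI hj => [|D] I hI hj; first by case/andP: hj => /leq_trans h /h.
set m := (D.+2 - j)%N.
have hm : (m <= D.+1)%N by rewrite /m; case/andP: hj => h _; rewrite leq_subLR -addn1 addnC leq_add2r.
case: hI => hid hmul h3.
have id0 : forall a b, (1 <= a <= D.+2)%N -> (1 <= b <= D.+2)%N -> I a b 0.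
  by move=> a b ha hb; case: (hid a b ha hb).
have incl : forall i b c x, (1 <= i <= D.+2)%N -> (1 <= c)%N -> (c <= b)%N -> (b <= D.+2)%N ->
    I i b x -> I i c x.
  move=> i b c x hi hc hcb hb hx; rewrite -(mulr1 x); apply: (hmul i b c) => //.
  - by rewrite (leq_trans hc hcb).
  - by rewrite hc (leq_trans hcb hb).
  - by apply: h3 => //; rewrite hc.
have e1E : e1 R D.+1 = delta_mx 0 0.
  apply/matrixP => a b; rewrite !mxE.
  by congr (_%:R); congr (_ && _); apply/eqP/eqP => [h|->//]; apply: val_inj.
have rng : forall i : 'I_D.+1, (1 <= i.+1 <= D.+2)%N by move=> i; rewrite /= ?ltnS ltnW.
pose dl := @delta_mx R 1 D.+1 0 0.
have key : forall u : 'cV[R]_D.+1,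
    in_AfAe1 I m (u *m dl) <-> (forall i : 'I_D.+1, I i.+1 m.+1 (u i 0)).
  move=> u; split.
  - case=> n [a [b [ha [hb hn]]]] i.
    set S := \sum_(k < n) _ in hn.
    have -> : u i 0 = (u *m dl - S) i 0 + S i 0.
      have -> : u i 0 = (u *m dl) i 0 by rewrite mxdelta eqxx mulr1.
      by rewrite -{1}(subrK S (u *m dl)) mxE.
    apply: idealD; first by apply: hid => //; rewrite /= ?ltnS.
    + apply: (incl _ D.+2) => //.
    + rewrite summxE; apply: ideal_sum => [|k _]; first by apply: hid => //; rewrite /= ?ltnS.
      apply: rowideal => [|l]; first by apply: hid => //; rewrite /= ?ltnS.
      apply: rowideal => [|l']; first by apply: hid => //; rewrite /= ?ltnS.
      rewrite /fsum mulmx_sumr summxE; apply: ideal_sum => [|p hp]; first by apply: hid => //; rewrite /= ?ltnS.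
      rewrite mxdelta; case: (hid i.+1 m.+1 (rng i)) => //;
      move=> _ _ _ H; apply: H; apply: (incl _ p.+1) => //; rewrite ?rng ?hp /= ?ltnS ?(ltnW (ltn_ord p)) //. exact: (ha k i p).
  - move=> hu; case: (ltnP m D.+1) => hmD.
    + pose mo := Ordinal hmD.
      exists 1%N, (fun _ => u *m @delta_mx R 1 D.+1 0 mo), (fun _ => delta_mx mo 0).
      split; [|split].
      * move=> _ i k; rewrite mxdelta; case: eqP => [->|_].
          by rewrite mulr1; apply: hu.
        by rewrite mulr0; apply: id0 => //; apply: rng.
      * move=> _ i k; rewrite mxE; case: andP => [[/eqP -> /eqP ->]|_].
          by apply: h3.
        by apply: id0 => //; apply: rng.
      * have hf : @delta_mx R 1 D.+1 0 mo *m fsum R D.+1 m = delta_mx 0 mo.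
          rewrite /fsum mulmx_sumr (bigD1 mo) //= mul_delta_mx big1 ?addr0 //.
          by move=> k /andP [_ hk]; rewrite mul_delta_mx_cond eq_sym (negbTE hk).
        rewrite big_ord1 e1E -!mulmxA mul_delta_mx (mulmxA (delta_mx 0 mo)) hf mul_delta_mx subrr.
        move=> i k; rewrite mxE; apply: id0; [exact: rng | by rewrite /= leqnn].
    + exists 0%N, (fun _ => 0), (fun _ => 0); split; [|split].
      * by case.
      * by case.
      * rewrite big_ord0 subr0 => i k; rewrite mxdelta; case: eqP => _.
          rewrite mulr1; have hmE : m = D.+1 by apply/eqP; rewrite eqn_leq hm hmD.
          by move: (hu i); rewrite hmE.
        by rewrite mulr0; apply: id0; [exact: rng | by rewrite /= leqnn].
have in0 : in_AfAe1 I m (0 : 'M[R]_D.+1).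
  exists 0%N, (fun _ => 0), (fun _ => 0); split; [by case|split; first by case].
  by rewrite big_ord0 subr0 => i k; rewrite mxE; apply: id0; [exact: rng | by rewrite /= leqnn].
have dle : dl *m e1 R D.+1 = dl by rewrite e1E mul_delta_mx.
exists (fun v => v *m dl); split.
  move=> v i k; rewrite mxdelta; case: eqP => [->|_].
    by rewrite mulr1; apply: h3 => //; rewrite ltnS ltnW.
  by rewrite mulr0; apply: id0; exact: rng.
have mS : (D.+3 - j)%N = m.+1.
  by rewrite /m subSn //; case/andP: hj => _ h; rewrite ltnW // ltnS ltnW.
split.
- move=> v w hvw; rewrite -!mulmxA dle -mulmxBl; apply/key => i; rewrite -mS; exact: hvw.
- move=> v w; rewrite -!mulmxA dle mulmxDl subrr; exact: in0.
- move=> x v _; rewrite -!mulmxA dle !mulmxA subrr; exact: in0.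
- move=> v w; rewrite -!mulmxA dle -mulmxBl => /key h i; rewrite mS; exact: h.
- move=> a _; exists (a *m delta_mx 0 0); rewrite -!mulmxA dle.
  rewrite mul_delta_mx -e1E subrr; exact: in0.
Qed.
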